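(* Let $(n_k)_{k\ge0}$ be a strictly increasing sequence of positive integers such that $n_k$ divides $n_{k+1}$ for every $k\ge0$, and let $(a_k)_{k\ge0}$ be a sequence of positive real numbers decreasing to $0$ with $\sum_{k\ge0}a_k=+\infty$. Then there exists a continuous Borel probability measure $\sigma$ on $\mathbb{T}$ such that $|\hat\sigma(n_k)-1|\le a_k$ for every $k\ge0$.
   Context: $\hat\sigma(n)=\int_{\mathbb{T}}\lambda^n\,d\sigma(\lambda)$; continuous means atomless. *)

(* Defs.v *)
From Stdlib Require Import Reals.
Open Scope R_scope.

Inductive borel : (R -> Prop) -> Prop :=
| borel_Ico (a b : R) : borel (fun x => a <= x < b)
| borel_compl (A : R -> Prop) : borel A -> borel (fun x => ~ A x)
| borel_cunion (A : nat -> R -> Prop) :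
    (forall n, borel (A n)) -> borel (fun x => exists n, A n x)
| borel_ext (A B : R -> Prop) : (forall x, A x <-> B x) -> borel A -> borel B.

(* The circle T is parametrized by t in [0,1) via lambda = exp(2 pi i t).
   A Borel probability measure on T is a countably additive, nonnegative
   set function on the Borel sets of R carried by [0,1) with total mass 1. *)
Definition borel_prob_measure_T (mu : (R -> Prop) -> R) : Prop :=
  (forall A, borel A -> 0 <= mu A) /\
  (forall A : nat -> R -> Prop,
      (forall n, borel (A n)) ->
      (forall m n x, m <> n -> A m x -> A n x -> False) ->
      infinite_sum (fun n => mu (A n)) (mu (fun x => exists n, A n x))) /\
  mu (fun _ => True) = 1 /\
  mu (fun x => 0 <= x < 1) = 1.

(* continuous = atomless *)
Definition atomless (mu : (R -> Prop) -> R) : Prop :=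
  forall t : R, mu (fun x => x = t) = 0.

(* Riemann-Stieltjes sums  sum_{j<N} f(j/N) mu([j/N,(j+1)/N))  which converge
   to  \int_[0,1) f dmu  for f continuous and 1-periodic. *)
Definition RS_sum (mu : (R -> Prop) -> R) (f : R -> R) (N : nat) : R :=
  match N with
  | O => 0
  | S N' => sum_f_R0 (fun j => f (INR j / INR N) *
              mu (fun x => INR j / INR N <= x < (INR j + 1) / INR N)) N'
  end.

(* hat sigma(m) = re + i im, where
   re = \int cos(2 pi m t) dmu(t), im = \int sin(2 pi m t) dmu(t). *)
Definition fourier_coeff (mu : (R -> Prop) -> R) (m : nat) (re im : R) : Prop :=
  Un_cv (RS_sum mu (fun t => cos (2 * PI * INR m * t))) re /\
  Un_cv (RS_sum mu (fun t => sin (2 * PI * INR m * t))) im.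

Definition cmod_minus1 (re im : R) : R := sqrt ((re - 1)^2 + im^2).

(* Main.v *)
Require Import Defs.
From Stdlib Require Import Reals Arith Lra Lia ZArith.
Open Scope R_scope.

Fixpoint sm (N : nat) (g : nat -> R) : R :=
  match N with O => 0 | S N' => sm N' g + g N' end.

Lemma sm_ext N g h : (forall i, (i < N)%nat -> g i = h i) -> sm N g = sm N h.
Proof.
induction N as [|N IH]; intros H; simpl; [reflexivity|].
rewrite IH by (intros; apply H; lia). rewrite H by lia. reflexivity.
Qed.

Lemma sm_add N M g : sm (N + M) g = sm N g + sm M (fun j => g (N + j)%nat).
Proof.
induction M as [|M IH]; simpl.
- rewrite Nat.add_0_r; ring.
- rewrite Nat.add_succ_r; simpl; rewrite IH; ring.
Qed.

Lemma sm_block N M g : sm (N * M) g = sm N (fun i => sm M (fun l => g (i * M + l)%nat)).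
Proof.
induction N as [|N IH]; simpl; [reflexivity|].
rewrite Nat.add_comm, sm_add, IH. reflexivity.
Qed.

Lemma sm_plus N g h : sm N (fun i => g i + h i) = sm N g + sm N h.
Proof. induction N as [|N IH]; simpl; [ring|rewrite IH; ring]. Qed.

Lemma sm_scal N c g : sm N (fun i => c * g i) = c * sm N g.
Proof. induction N as [|N IH]; simpl; [ring|rewrite IH; ring]. Qed.

Lemma sm_le N g h : (forall i, (i < N)%nat -> g i <= h i) -> sm N g <= sm N h.
Proof.
induction N as [|N IH]; intros H; simpl; [lra|].
apply Rplus_le_compat; [apply IH; intros; apply H; lia| apply H; lia].
Qed.

Lemma sm_nonneg N g : (forall i, (i < N)%nat -> 0 <= g i) -> 0 <= sm N g.
Proof.
intros H. replace 0 with (sm N (fun _ => 0)).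
- apply sm_le; auto.
- induction N; simpl; [reflexivity| rewrite IHN; [ring| intros; apply H; lia]].
Qed.

Lemma sm_zero N g : (forall i, (i < N)%nat -> g i = 0) -> sm N g = 0.
Proof.
induction N as [|N IH]; intros H; simpl; [reflexivity|].
rewrite IH, H by (try intros; try apply H; lia). ring.
Qed.

Lemma sm_abs N g : Rabs (sm N g) <= sm N (fun i => Rabs (g i)).
Proof.
induction N as [|N IH]; simpl.
- rewrite Rabs_R0; lra.
- eapply Rle_trans; [apply Rabs_triang|]. lra.
Qed.

Lemma sm_tele K g : sm K (fun l => g (S l) - g l) = g K - g O.
Proof. induction K as [|K IH]; simpl; [ring| rewrite IH; ring]. Qed.

Lemma sum_f_R0_sm g N : sum_f_R0 g N = sm (S N) g.
Proof. induction N as [|N IH]; simpl in *; [ring| rewrite IH; reflexivity]. Qed.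

Lemma sm_mono_N N M g : (N <= M)%nat -> (forall i, 0 <= g i) -> sm N g <= sm M g.
Proof.
intros H Hg. replace M with (N + (M - N))%nat by lia.
rewrite sm_add. assert (0 <= sm (M - N) (fun j => g (N + j)%nat)) by (apply sm_nonneg; auto). lra.
Qed.

Lemma sm_minus N g h : sm N g - sm N h = sm N (fun i => g i - h i).
Proof. induction N as [|N IH]; simpl; [ring| rewrite <- IH; ring]. Qed.


Definition fl (x : R) : nat := Z.to_nat (Int_part x).

Lemma fl_spec x : 0 <= x -> INR (fl x) <= x < INR (fl x) + 1.
Proof.
intros Hx. destruct (base_Int_part x) as [H1 H2].
assert (Hz : (0 <= Int_part x)%Z).
{ assert (IZR 0 < IZR (Int_part x + 1)) by (rewrite plus_IZR; simpl; lra).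
  apply lt_IZR in H. lia. }
unfold fl. rewrite INR_IZR_INZ, Z2Nat.id by exact Hz. lra.
Qed.

Lemma fl_small x : x < 1 -> fl x = 0%nat.
Proof.
intros Hx. destruct (base_Int_part x) as [H1 H2].
assert (IZR (Int_part x) < IZR 1) by lra. apply lt_IZR in H.
unfold fl. destruct (Int_part x); simpl; try reflexivity; lia.
Qed.

Lemma fl_ge k x : INR k <= x -> (k <= fl x)%nat.
Proof.
intros H. pose proof (pos_INR k). destruct (fl_spec x) as [_ H2]; [lra|].
assert (INR k < INR (S (fl x))) by (rewrite S_INR; lra).
apply INR_lt in H1. lia.
Qed.

Lemma fl_lt k x : 0 <= x -> x < INR k -> (fl x < k)%nat.
Proof.
intros H0 H. destruct (fl_spec x) as [H1 _]; [lra|].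
apply INR_lt. lra.
Qed.

Lemma fl_INR k : fl (INR k) = k.
Proof.
pose proof (pos_INR k).
apply Nat.le_antisymm.
- apply Nat.lt_succ_r, fl_lt; [lra| rewrite S_INR; lra].
- apply fl_ge; lra.
Qed.

Lemma fl_mono x y : x <= y -> (fl x <= fl y)%nat.
Proof.
intros H. destruct (Rlt_dec x 1) as [Hx|Hx].
- rewrite fl_small by exact Hx. lia.
- apply fl_ge. destruct (fl_spec x); lra.
Qed.

Lemma lim_le (v : nat -> R) l c : Un_cv v l -> (forall m, v m <= c) -> l <= c.
Proof.
intros Hv Hc. apply Rnot_lt_le. intros Hlt.
destruct (Hv (l - c)) as [N HN]; [lra|].
specialize (HN N (Nat.le_refl N)). specialize (Hc N).
unfold R_dist in HN. apply Rabs_def2 in HN. lra.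
Qed.

Lemma growing_mono (v : nat -> R) : Un_growing v -> forall i j, (i <= j)%nat -> v i <= v j.
Proof.
intros Hg i j Hij. induction Hij; [lra|]. eapply Rle_trans; [apply IHHij| apply Hg].
Qed.

Lemma abs_sin_le x : Rabs (sin x) <= Rabs x.
Proof.
assert (Hpos : forall y, 0 <= y -> Rabs (sin y) <= y).
{ intros y Hy. destruct (Req_dec y 0) as [->|Hy0].
  - rewrite sin_0, Rabs_R0. lra.
  - pose proof (sin_lt_x y ltac:(lra)). pose proof (SIN_bound y).
    destruct (Rle_dec y PI) as [HP|HP].
    + pose proof (sin_ge_0 y Hy HP). rewrite Rabs_right by lra. lra.
    + pose proof PI2_1. apply Rabs_le. lra. }
destruct (Rle_dec 0 x) as [Hx|Hx].
- rewrite (Rabs_right x) by lra. apply Hpos; lra.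
- rewrite (Rabs_left x) by lra. replace x with (- (- x)) by ring.
  rewrite sin_neg, Rabs_Ropp. replace (- - x) with x by ring. apply Hpos. lra.
Qed.

Lemma cos_lip x y : Rabs (cos x - cos y) <= Rabs (x - y).
Proof.
rewrite form2. rewrite !Rabs_mult.
pose proof (abs_sin_le ((x - y) / 2)). pose proof (SIN_bound ((x + y) / 2)).
assert (Rabs (sin ((x + y) / 2)) <= 1) by (apply Rabs_le; lra).
replace (Rabs ((x - y) / 2)) with (Rabs (x - y) / 2) in H.
2:{ unfold Rdiv. rewrite Rabs_mult, (Rabs_right (/ 2)); [reflexivity| lra]. }
rewrite (Rabs_left (-2)) by lra.
pose proof (Rabs_pos (sin ((x - y) / 2))). pose proof (Rabs_pos (sin ((x + y) / 2))).
nra.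
Qed.

Lemma sin_lip x y : Rabs (sin x - sin y) <= Rabs (x - y).
Proof.
rewrite form4. rewrite !Rabs_mult.
pose proof (abs_sin_le ((x - y) / 2)). pose proof (COS_bound ((x + y) / 2)).
assert (Rabs (cos ((x + y) / 2)) <= 1) by (apply Rabs_le; lra).
replace (Rabs ((x - y) / 2)) with (Rabs (x - y) / 2) in H.
2:{ unfold Rdiv. rewrite Rabs_mult, (Rabs_right (/ 2)); [reflexivity| lra]. }
rewrite (Rabs_right 2) by lra.
pose proof (Rabs_pos (sin ((x - y) / 2))). pose proof (Rabs_pos (cos ((x + y) / 2))).
nra.
Qed.

Lemma nat_large x : exists N, x < INR N.
Proof.
destruct (archimed x) as [H _].
destruct (Z_lt_le_dec (up x) 0) as [Hz|Hz].
- exists 0%nat. simpl. apply IZR_lt in Hz. lra.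
- exists (Z.to_nat (up x)). rewrite INR_IZR_INZ, Z2Nat.id by exact Hz. lra.
Qed.

Section RS.
Variable Fn : R -> R.
Hypothesis Fn_mono : forall x y, x <= y -> Fn x <= Fn y.
Hypothesis Fn01 : Fn 1 - Fn 0 = 1.

Definition xg K j := INR j / INR K.
Definition dF K j := Fn (xg K (S j)) - Fn (xg K j).

Definition RSF (f : R -> R) (K : nat) := sm K (fun j => f (xg K j) * dF K j).

Lemma xg_le K i j : (0 < K)%nat -> (i <= j)%nat -> xg K i <= xg K j.
Proof.
intros HK Hij. unfold xg. apply Rmult_le_compat_r.
- apply Rlt_le, Rinv_0_lt_compat, lt_0_INR; exact HK.
- apply le_INR; exact Hij.
Qed.

Lemma dF_ge0 K j : (0 < K)%nat -> 0 <= dF K j.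
Proof. intros HK. unfold dF. pose proof (Fn_mono _ _ (xg_le K j (S j) HK ltac:(lia))). lra. Qed.

Lemma dF_total K : (0 < K)%nat -> sm K (dF K) = 1.
Proof.
intros HK. unfold dF. rewrite (sm_tele K (fun j => Fn (xg K j))).
unfold xg. simpl. replace (INR K / INR K) with 1 by (field; apply not_0_INR; lia).
replace (0 / INR K) with 0 by (field; apply not_0_INR; lia). exact Fn01.
Qed.

Lemma RSF_refine f L N M : (0 < N)%nat -> (0 < M)%nat -> 0 <= L ->
  (forall x y, Rabs (f x - f y) <= L * Rabs (x - y)) ->
  Rabs (RSF f (N * M) - RSF f N) <= L / INR N.
Proof.
intros HN HM HL Hf.
assert (HNr : 0 < INR N) by (apply lt_0_INR; exact HN).
assert (HMr : 0 < INR M) by (apply lt_0_INR; exact HM).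
assert (HNM : (0 < N * M)%nat) by nia.
assert (E1 : forall i l, xg (N * M) (i * M + l) = xg N i + INR l / INR (N * M)).
{ intros i l. unfold xg. rewrite plus_INR, !mult_INR. field. lra. }
assert (E2 : forall i, dF N i = sm M (fun l => dF (N * M) (i * M + l))).
{ intros i. set (g := fun q => Fn (xg (N * M) (i * M + q))).
  transitivity (g M - g 0%nat).
  - unfold g, dF. rewrite E1, E1. f_equal; f_equal.
    + unfold xg. rewrite S_INR, mult_INR. field. lra.
    + simpl (INR 0). unfold Rdiv. ring.
  - rewrite <- sm_tele. apply sm_ext. intros l _. unfold g, dF. rewrite Nat.add_succ_r. reflexivity. }
unfold RSF. rewrite sm_block.
rewrite (sm_ext N (fun j => f (xg N j) * dF N j)
  (fun i => sm M (fun l => f (xg N i) * dF (N * M) (i * M + l)))).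
2:{ intros i _. rewrite E2, sm_scal. reflexivity. }
rewrite sm_minus.
rewrite (sm_ext N _ (fun i => sm M (fun l => (f (xg (N * M) (i * M + l)) - f (xg N i)) * dF (N * M) (i * M + l)))).
2:{ intros i _. rewrite sm_minus. apply sm_ext. intros; ring. }
eapply Rle_trans; [apply sm_abs|].
apply Rle_trans with (sm N (fun i => sm M (fun l => L / INR N * dF (N * M) (i * M + l)))).
- apply sm_le. intros i Hi. eapply Rle_trans; [apply sm_abs|]. apply sm_le. intros l Hl.
  rewrite Rabs_mult, (Rabs_right (dF _ _)) by (apply Rle_ge, dF_ge0; exact HNM).
  apply Rmult_le_compat_r; [apply dF_ge0; exact HNM|].
  eapply Rle_trans; [apply Hf|]. apply Rmult_le_compat_l; [exact HL|].
  rewrite E1. replace (xg N i + INR l / INR (N * M) - xg N i) with (INR l / INR (N * M)) by ring.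
  rewrite Rabs_right.
  + rewrite mult_INR. apply lt_INR in Hl.
    replace (INR l / (INR N * INR M)) with ((INR l / INR M) * / INR N) by (field; lra).
    rewrite <- (Rmult_1_l (/ INR N)) at 2.
    apply Rmult_le_compat_r; [apply Rlt_le, Rinv_0_lt_compat; lra|].
    apply (Rmult_le_reg_r (INR M)); [lra|]. unfold Rdiv. rewrite Rmult_assoc, Rinv_l by lra. lra.
  + apply Rle_ge. unfold Rdiv. apply Rmult_le_pos; [apply pos_INR| apply Rlt_le, Rinv_0_lt_compat, lt_0_INR; exact HNM].
- rewrite (sm_ext N _ (fun i => L / INR N * sm M (fun l => dF (N * M) (i * M + l)))).
  2:{ intros; apply sm_scal. }
  rewrite sm_scal, <- sm_block, dF_total by exact HNM. lra.
Qed.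

Lemma RSF_limit f L : 0 <= L ->
  (forall x y, Rabs (f x - f y) <= L * Rabs (x - y)) ->
  exists l, Un_cv (RSF f) l /\ forall N, (0 < N)%nat -> Rabs (l - RSF f N) <= L / INR N.
Proof.
intros HL Hf.
assert (Hc : Cauchy_crit (RSF f)).
{ intros eps He.
  destruct (nat_large (2 * L / eps)) as [N0 HN0].
  exists (S N0). intros N M HN HM.
  assert (HNr : INR (S N0) <= INR N) by (apply le_INR; lia).
  assert (HMr : INR (S N0) <= INR M) by (apply le_INR; lia).
  rewrite S_INR in HNr, HMr.
  pose proof (pos_INR N0).
  pose proof (RSF_refine f L N M ltac:(lia) ltac:(lia) HL Hf).
  pose proof (RSF_refine f L M N ltac:(lia) ltac:(lia) HL Hf).
  rewrite Nat.mul_comm in H1.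
  unfold Rdist, R_dist.
  replace (RSF f N - RSF f M) with (-(RSF f (N * M) - RSF f N) + (RSF f (N * M) - RSF f M)) by ring.
  eapply Rle_lt_trans; [apply Rabs_triang|]. rewrite Rabs_Ropp.
  assert (L / INR N + L / INR M < eps).
  { assert (L / INR N <= L / (INR N0 + 1)).
    { unfold Rdiv. apply Rmult_le_compat_l; [exact HL|]. apply Rinv_le_contravar; lra. }
    assert (L / INR M <= L / (INR N0 + 1)).
    { unfold Rdiv. apply Rmult_le_compat_l; [exact HL|]. apply Rinv_le_contravar; lra. }
    assert (2 * L / (INR N0 + 1) < eps).
    { apply (Rmult_lt_reg_r (INR N0 + 1)); [lra|].
      replace (2 * L / (INR N0 + 1) * (INR N0 + 1)) with (2 * L) by (field; lra).
      apply (Rmult_lt_reg_l (/ eps)); [apply Rinv_0_lt_compat; lra|].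
      replace (/ eps * (2 * L)) with (2 * L / eps) by (unfold Rdiv; ring).
      replace (/ eps * (eps * (INR N0 + 1))) with (INR N0 + 1) by (field; lra). lra. }
    unfold Rdiv in *. lra. }
  lra. }
destruct (R_complete _ Hc) as [l Hl].
exists l. split; [exact Hl|].
intros N HN. apply Rnot_lt_le. intros Hlt.
set (e := Rabs (l - RSF f N) - L / INR N).
destruct (Hl e) as [K HK]; [unfold e; lra|].
specialize (HK (N * S K)%nat ltac:(nia)).
pose proof (RSF_refine f L N (S K) HN ltac:(lia) HL Hf).
unfold R_dist in HK.
assert (Rabs (l - RSF f N) <= Rabs (RSF f (N * S K) - l) + Rabs (RSF f (N * S K) - RSF f N)).
{ replace (l - RSF f N) with (-(RSF f (N * S K) - l) + (RSF f (N * S K) - RSF f N)) by ring.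
  eapply Rle_trans; [apply Rabs_triang|]. rewrite Rabs_Ropp. lra. }
unfold e in HK. lra.
Qed.

End RS.


Section Cells.
Variable n : nat -> nat.
Variable a : nat -> R.
Hypothesis hn_pos : forall k, (0 < n k)%nat.
Hypothesis hn_inc : forall k, (n k < n (S k))%nat.
Hypothesis hn_div : forall k, Nat.divide (n k) (n (S k)).
Hypothesis ha_pos : forall k, 0 < a k.

Definition r m := (n (S m) / n m)%nat.

Lemma n_S m : n (S m) = (r m * n m)%nat.
Proof.
unfold r. destruct (hn_div m) as [z Hz]. rewrite Hz at 2.
rewrite Nat.div_mul by (specialize (hn_pos m); lia). exact Hz.
Qed.

Lemma r_ge2 m : (2 <= r m)%nat.
Proof.
pose proof (n_S m). pose proof (hn_inc m). pose proof (hn_pos m).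
destruct (r m) as [|[|k]]; simpl in *; lia.
Qed.

Lemma n_double m : (2 * n m <= n (S m))%nat.
Proof. rewrite n_S. pose proof (r_ge2 m). nia. Qed.

Lemma n_ge m : (S m <= n m)%nat.
Proof. induction m; [apply hn_pos| pose proof (hn_inc m); lia]. Qed.

Definition p j := Rmin (1/2) (a j / 64).

Lemma p_ge0 j : 0 <= p j.
Proof. unfold p, Rmin. destruct (Rle_dec _ _); [lra| pose proof (ha_pos j); lra]. Qed.
Lemma p_le_half j : p j <= 1/2.
Proof. apply Rmin_l. Qed.
Lemma p_le_a j : p j <= a j / 64.
Proof. apply Rmin_r. Qed.

Definition w m d := match d with O => 1 - p (S m) | 1%nat => p (S m) | _ => 0 end.

Fixpoint W m i := match m with
  | O => match i with O => 1 | _ => 0 end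
  | S m' => W m' (i / r m')%nat * w m' (i mod r m')%nat end.

Lemma w_ge0 m d : 0 <= w m d.
Proof. destruct d as [|[|d]]; simpl; pose proof (p_ge0 (S m)); pose proof (p_le_half (S m)); lra. Qed.

Lemma w_le m d : w m d <= 1 - p (S m).
Proof. destruct d as [|[|d]]; simpl; pose proof (p_ge0 (S m)); pose proof (p_le_half (S m)); lra. Qed.

Lemma W_ge0 m i : 0 <= W m i.
Proof.
revert i; induction m; intros i; simpl.
- destruct i; lra.
- apply Rmult_le_pos; [apply IHm| apply w_ge0].
Qed.

Lemma W_S m i d : (d < r m)%nat -> W (S m) (i * r m + d) = W m i * w m d.
Proof.
intros Hd. simpl. pose proof (r_ge2 m).
rewrite (Nat.div_add_l i (r m) d) by lia. rewrite Nat.div_small by lia.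
rewrite Nat.add_0_r. f_equal. f_equal.
rewrite Nat.add_comm, Nat.Div0.mod_add. apply Nat.mod_small; lia.
Qed.

Lemma W_zero m i : (n m <= i)%nat -> W m i = 0.
Proof.
revert i; induction m; intros i Hi; simpl.
- pose proof (hn_pos 0). destruct i; [lia| reflexivity].
- rewrite IHm; [ring|]. rewrite n_S in Hi. pose proof (r_ge2 m).
  apply Nat.div_le_lower_bound; lia.
Qed.

Lemma sum_w m : sm (r m) (w m) = 1.
Proof.
pose proof (r_ge2 m). replace (r m) with (2 + (r m - 2))%nat by lia.
rewrite sm_add. rewrite (sm_zero _ (fun j => w m (2 + j)%nat)) by (intros; reflexivity).
simpl. ring.
Qed.

Lemma sm_W_S m g : sm (n (S m)) g = sm (n m) (fun i => sm (r m) (fun d => g (i * r m + d)%nat)).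
Proof. rewrite n_S, Nat.mul_comm, sm_block. reflexivity. Qed.

Lemma W_total m : sm (n m) (W m) = 1.
Proof.
induction m.
- pose proof (hn_pos 0). replace (n 0) with (1 + (n 0 - 1))%nat by lia.
  rewrite sm_add, (sm_zero (n 0 - 1)) by (intros; reflexivity). simpl. ring.
- rewrite sm_W_S. rewrite <- IHm. apply sm_ext. intros i Hi.
  rewrite (sm_ext _ _ (fun d => W m i * w m d)) by (intros; apply W_S; auto).
  rewrite sm_scal, sum_w. ring.
Qed.

Definition G m i := sm i (W m).

Lemma G_S m i : G (S m) (i * r m) = G m i.
Proof.
unfold G. rewrite sm_block. apply sm_ext. intros j Hj.
rewrite (sm_ext _ _ (fun d => W m j * w m d)) by (intros; apply W_S; auto).
rewrite sm_scal, sum_w. ring.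
Qed.

Lemma G_mono m i j : (i <= j)%nat -> G m i <= G m j.
Proof. intros; apply sm_mono_N; auto; apply W_ge0. Qed.

Lemma G_big m i : (n m <= i)%nat -> G m i = 1.
Proof.
intros H. unfold G. replace i with (n m + (i - n m))%nat by lia.
rewrite sm_add, W_total, sm_zero; [ring|]. intros; apply W_zero; lia.
Qed.

Lemma G_le1 m i : G m i <= 1.
Proof.
destruct (Nat.le_gt_cases (n m) i).
- rewrite G_big; auto; lra.
- rewrite <- (G_big m (n m)) by lia. apply G_mono; lia.
Qed.

Lemma G_succ m i : G m (S i) = G m i + W m i.
Proof. reflexivity. Qed.

Lemma G_0 m : G m 0 = 0.
Proof. reflexivity. Qed.

Fixpoint Mx m := match m with O => 1 | S m' => Mx m' * (1 - p (S m')) end.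

Lemma W_le_Mx m i : W m i <= Mx m.
Proof.
revert i; induction m; intros i; simpl.
- destruct i; lra.
- apply Rmult_le_compat; [apply W_ge0| apply w_ge0| apply IHm| apply w_le].
Qed.

Fixpoint Qd m d := match d with O => 1%nat | S d' => (r (m + d') * Qd m d')%nat end.

Lemma n_Qd m d : n (m + d) = (Qd m d * n m)%nat.
Proof.
induction d; simpl.
- rewrite Nat.add_0_r; lia.
- rewrite <- plus_n_Sm, n_S, IHd. ring.
Qed.

Lemma G_Qd m d i : G (m + d) (i * Qd m d) = G m i.
Proof.
induction d; simpl.
- rewrite Nat.add_0_r, Nat.mul_1_r. reflexivity.
- rewrite <- plus_n_Sm.
  replace (i * (r (m + d) * Qd m d))%nat with ((i * Qd m d) * r (m + d))%nat by ring.
  rewrite G_S. exact IHd.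
Qed.


Definition u t m := G m (fl (INR (n m) * t)).

Lemma INR_nS m : INR (n (S m)) = INR (r m) * INR (n m).
Proof. rewrite n_S, mult_INR. reflexivity. Qed.

Lemma G_ge0 m i : 0 <= G m i.
Proof. apply sm_nonneg; intros; apply W_ge0. Qed.

Lemma u_growing t : Un_growing (u t).
Proof.
intros m. unfold u.
set (k := fl (INR (n m) * t)).
assert (Hk : (k * r m <= fl (INR (n (S m)) * t))%nat).
{ destruct (Rle_dec 0 t) as [Ht|Ht].
  - apply fl_ge. rewrite mult_INR, INR_nS.
    destruct (fl_spec (INR (n m) * t)) as [H1 _].
    + apply Rmult_le_pos; [apply pos_INR| exact Ht].
    + fold k in H1. pose proof (pos_INR (r m)). nra.
  - unfold k. rewrite fl_small; [lia|].
    pose proof (pos_INR (n m)). nra. }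
rewrite <- (G_S m k). apply G_mono. exact Hk.
Qed.

Lemma u_bound t : bound (EUn (u t)).
Proof.
exists 1. intros x [i ->]. apply G_le1.
Qed.

Definition F t := proj1_sig (growing_cv (u t) (u_growing t) (u_bound t)).

Lemma F_cv t : Un_cv (u t) (F t).
Proof. unfold F. destruct (growing_cv _ _ _) as [l Hl]. exact Hl. Qed.

Lemma F_ge t m : u t m <= F t.
Proof. apply growing_ineq; [apply u_growing| apply F_cv]. Qed.

Lemma F_le_gen t c : (forall m, u t m <= c) -> F t <= c.
Proof. intros H. apply (lim_le (u t)); [apply F_cv| exact H]. Qed.

Lemma INR_Qd m d : INR (n (m + d)) = INR (Qd m d) * INR (n m).
Proof. rewrite n_Qd, mult_INR. reflexivity. Qed.

Lemma F_le t m : F t <= G m (S (fl (INR (n m) * t))).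
Proof.
apply F_le_gen. intros M.
destruct (Nat.le_gt_cases m M) as [HM|HM].
- replace M with (m + (M - m))%nat by lia. set (d := (M - m)%nat).
  unfold u. rewrite <- (G_Qd m d). apply G_mono.
  destruct (Rle_dec 0 t) as [Ht|Ht].
  + apply Nat.lt_le_incl. apply fl_lt.
    * apply Rmult_le_pos; [apply pos_INR| exact Ht].
    * rewrite INR_Qd, mult_INR.
      destruct (fl_spec (INR (n m) * t)) as [_ H2].
      -- apply Rmult_le_pos; [apply pos_INR| exact Ht].
      -- rewrite S_INR. pose proof (hn_pos (m + d)). rewrite n_Qd in H.
         assert (0 < INR (Qd m d)). { apply lt_0_INR. nia. }
         nra.
  + rewrite fl_small; [lia|]. pose proof (pos_INR (n (m + d))). nra.
- eapply Rle_trans. apply (growing_mono _ (u_growing t) M m). lia.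
  unfold u. apply G_mono. lia.
Qed.

Lemma F_grid m i : F (INR i / INR (n m)) = G m i.
Proof.
assert (Hn : 0 < INR (n m)) by (apply lt_0_INR, hn_pos).
assert (Hu : u (INR i / INR (n m)) m = G m i).
{ unfold u. replace (INR (n m) * (INR i / INR (n m))) with (INR i) by (field; lra).
  rewrite fl_INR. reflexivity. }
apply Rle_antisym.
- apply F_le_gen. intros M.
  destruct (Nat.le_gt_cases m M) as [HM|HM].
  + replace M with (m + (M - m))%nat by lia. set (d := (M - m)%nat).
    unfold u. rewrite <- (G_Qd m d i).
    replace (INR (n (m + d)) * (INR i / INR (n m))) with (INR (i * Qd m d)).
    * rewrite fl_INR. lra.
    * rewrite INR_Qd, mult_INR. field. lra.
  + rewrite <- Hu. apply (growing_mono _ (u_growing _)). lia.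
- rewrite <- Hu. apply F_ge.
Qed.

Lemma F_mono t s : t <= s -> F t <= F s.
Proof.
intros H. apply F_le_gen. intros M. eapply Rle_trans; [|apply (F_ge s M)].
unfold u. apply G_mono, fl_mono. pose proof (pos_INR (n M)). nra.
Qed.

Lemma F_zero t : t <= 0 -> F t = 0.
Proof.
intros H. apply Rle_antisym.
- apply F_le_gen. intros M. unfold u. rewrite fl_small. unfold G; simpl; lra.
  pose proof (pos_INR (n M)). nra.
- pose proof (F_ge t 0). pose proof (G_ge0 0 (fl (INR (n 0) * t))). unfold u in H0. lra.
Qed.

Lemma F_one t : 1 <= t -> F t = 1.
Proof.
intros H. apply Rle_antisym.
- apply F_le_gen. intros M. apply G_le1.
- pose proof (F_ge t 0). unfold u in H0. rewrite G_big in H0; [lra|].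
  apply fl_ge. pose proof (pos_INR (n 0)). nra.
Qed.

Lemma F_jump t s m : s <= t -> t < s + 1 / INR (n m) -> F t - F s <= 2 * Mx m.
Proof.
intros H1 H2.
assert (Hn : 0 < INR (n m)) by (apply lt_0_INR, hn_pos).
set (k := fl (INR (n m) * s)).
assert (Hk : (fl (INR (n m) * t) <= S k)%nat).
{ destruct (Rle_dec 0 (INR (n m) * t)) as [Ht|Ht]; [|rewrite fl_small; [lia|lra]].
  apply Nat.lt_succ_r, fl_lt; [exact Ht|].
  assert (INR (n m) * t < INR (n m) * s + 1).
  { replace (INR (n m) * s + 1) with (INR (n m) * (s + 1 / INR (n m))) by (field; lra).
    apply Rmult_lt_compat_l; assumption. }
  destruct (Rle_dec 0 (INR (n m) * s)) as [Hs|Hs].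
  - destruct (fl_spec _ Hs). fold k in H3. rewrite !S_INR. lra.
  - unfold k. rewrite fl_small by lra. simpl. lra. }
pose proof (F_le t m). pose proof (F_ge s m). unfold u in H0. fold k in H0.
assert (G m (S (fl (INR (n m) * t))) <= G m (S (S k))) by (apply G_mono; lia).
assert (HG : G m (S (S k)) = G m k + W m k + W m (S k)) by (rewrite !G_succ; ring).
pose proof (W_le_Mx m k). pose proof (W_le_Mx m (S k)).
lra.
Qed.


Hypothesis ha_dec : Un_decreasing a.
Hypothesis ha_div : cv_infty (fun N => sum_f_R0 a N).

Lemma a_le0 j : a j <= a 0.
Proof. induction j; [lra| pose proof (ha_dec j); lra]. Qed.

Definition cst := / (64 + 2 * a 0).

Lemma cst_pos : 0 < cst.
Proof. unfold cst. apply Rinv_0_lt_compat. pose proof (ha_pos 0). lra. Qed.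

Lemma p_lower j : cst * a j <= p j.
Proof.
pose proof (ha_pos 0). pose proof (ha_pos j). pose proof (a_le0 j).
unfold p, Rmin, cst. destruct (Rle_dec (1/2) (a j / 64)) as [H2|H2].
- apply (Rmult_le_reg_l (64 + 2 * a 0)); [lra|].
  rewrite <- Rmult_assoc, Rinv_r, Rmult_1_l by lra. lra.
- apply (Rmult_le_reg_l (64 + 2 * a 0)); [lra|].
  rewrite <- Rmult_assoc, Rinv_r, Rmult_1_l by lra. unfold Rdiv. nra.
Qed.

Lemma aux_frac x y : 0 <= x -> 0 <= y -> (1 - x) / (1 + y) <= 1 / (1 + y + x).
Proof.
intros Hx Hy.
assert (H : (1 - x) * (1 + y + x) <= 1 + y) by nra.
replace ((1 - x) / (1 + y)) with (((1 - x) * (1 + y + x)) * / ((1 + y) * (1 + y + x))) by (field; lra).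
replace (1 / (1 + y + x)) with ((1 + y) * / ((1 + y) * (1 + y + x))) by (field; lra).
apply Rmult_le_compat_r; [apply Rlt_le, Rinv_0_lt_compat; nra | exact H].
Qed.

Lemma Mx_bound m : Mx m <= 1 / (1 + sm m (fun j => p (S j))).
Proof.
induction m; simpl.
- lra.
- assert (Hs : 0 <= sm m (fun j => p (S j))) by (apply sm_nonneg; intros; apply p_ge0).
  pose proof (p_ge0 (S m)). pose proof (p_le_half (S m)).
  eapply Rle_trans. apply Rmult_le_compat_r; [lra| exact IHm].
  replace (1 / (1 + sm m (fun j => p (S j))) * (1 - p (S m))) with
     ((1 - p (S m)) / (1 + sm m (fun j => p (S j)))) by (field; lra).
  replace (1 + (sm m (fun j => p (S j)) + p (S m))) with (1 + sm m (fun j => p (S j)) + p (S m)) by ring.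
  apply aux_frac; assumption.
Qed.

Lemma sm_shift m g : sm (S m) g = g O + sm m (fun j => g (S j)).
Proof. replace (S m) with (1 + m)%nat by lia. rewrite sm_add. simpl. ring. Qed.

Lemma Mx_to0 eps : 0 < eps -> exists m, Mx m < eps.
Proof.
intros He. pose proof cst_pos.
destruct (ha_div (a 0 + (1 / eps) / cst)) as [N HN].
exists N. specialize (HN N (Nat.le_refl N)).
rewrite sum_f_R0_sm, sm_shift in HN.
assert (Hl : cst * sm N (fun j => a (S j)) <= sm N (fun j => p (S j))).
{ rewrite <- sm_scal. apply sm_le. intros; apply p_lower. }
assert (HX : 1 / eps < cst * sm N (fun j => a (S j))).
{ apply (Rmult_lt_reg_l (/ cst)); [apply Rinv_0_lt_compat; lra|].
  rewrite <- Rmult_assoc, Rinv_l, Rmult_1_l by lra.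
  unfold Rdiv in HN |- *. rewrite Rmult_comm. lra. }
eapply Rle_lt_trans; [apply Mx_bound|].
set (X := sm N (fun j => p (S j))) in *.
assert (1 / eps < X) by lra.
assert (0 < 1 / eps) by (unfold Rdiv; rewrite Rmult_1_l; apply Rinv_0_lt_compat; lra).
apply (Rmult_lt_reg_r (1 + X)); [lra|].
replace (1 / (1 + X) * (1 + X)) with 1 by (field; lra).
apply (Rmult_lt_reg_l (/ eps)); [apply Rinv_0_lt_compat; lra|].
rewrite <- Rmult_assoc, Rinv_l, Rmult_1_l by lra. unfold Rdiv in *. lra.
Qed.

Lemma F_cont : continuity F.
Proof.
intros x eps He.
destruct (Mx_to0 (eps / 2)) as [m Hm]; [lra|].
assert (Hn : 0 < INR (n m)) by (apply lt_0_INR, hn_pos).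
exists (1 / INR (n m)). split.
- unfold Rdiv; rewrite Rmult_1_l; apply Rinv_0_lt_compat; exact Hn.
- intros y [_ Hy]. simpl in Hy |- *. unfold R_dist in Hy |- *.
  destruct (Rle_dec x y) as [Hxy|Hxy].
  + rewrite Rabs_right in Hy by lra. pose proof (F_jump y x m Hxy ltac:(lra)).
    pose proof (F_mono x y Hxy). rewrite Rabs_right by lra. lra.
  + rewrite Rabs_left in Hy by lra. pose proof (F_jump x y m ltac:(lra) ltac:(lra)).
    pose proof (F_mono y x ltac:(lra)). rewrite Rabs_left1 by lra. lra.
Qed.

Lemma a_mono k j : (k <= j)%nat -> a j <= a k.
Proof. intros H; induction H; [lra| pose proof (ha_dec m); lra]. Qed.

Definition om k := 2 * PI * INR (n k).
Definition Phi k t := (1 - cos (om k * t)) + Rabs (sin (om k * t)).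
Definition Sl m g := sm (n m) (fun i => g (INR i / INR (n m)) * W m i).

Lemma om_ge0 k : 0 <= om k.
Proof. unfold om. pose proof PI_RGT_0. pose proof (pos_INR (n k)). nra. Qed.

Lemma Phi_lip k t d : 0 <= d -> Phi k (t + d) <= Phi k t + 2 * om k * d.
Proof.
intros Hd. unfold Phi. pose proof (om_ge0 k).
pose proof (cos_lip (om k * (t + d)) (om k * t)).
pose proof (sin_lip (om k * (t + d)) (om k * t)).
replace (om k * (t + d) - om k * t) with (om k * d) in * by ring.
rewrite (Rabs_right (om k * d)) in H0, H1 by nra.
pose proof (Rabs_triang_inv (sin (om k * (t + d))) (sin (om k * t))).
pose proof (Rle_abs (- (cos (om k * (t + d)) - cos (om k * t)))). rewrite Rabs_Ropp in H3. pose proof (Rle_abs (sin (om k * (t + d)) - sin (om k * t))). lra.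
Qed.

Lemma Phi_ge0 k t : 0 <= Phi k t.
Proof. unfold Phi. pose proof (COS_bound (om k * t)). pose proof (Rabs_pos (sin (om k * t))). lra. Qed.

Lemma Phi_grid k i : Phi k (INR i / INR (n k)) = 0.
Proof.
assert (Hn : 0 < INR (n k)) by (apply lt_0_INR, hn_pos).
unfold Phi, om. replace (2 * PI * INR (n k) * (INR i / INR (n k))) with (0 + 2 * INR i * PI) by (field; lra).
rewrite cos_period, sin_period, cos_0, sin_0, Rabs_R0. ring.
Qed.

Lemma Sl_S m g : Sl (S m) g = sm (n m) (fun i => W m i * ((1 - p (S m)) * g (INR i / INR (n m))
    + p (S m) * g (INR i / INR (n m) + 1 / INR (n (S m))))).
Proof.
unfold Sl. rewrite sm_W_S. apply sm_ext. intros i Hi.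
pose proof (r_ge2 m).
assert (Hr : 0 < INR (r m)) by (apply lt_0_INR; lia).
assert (Hn : 0 < INR (n m)) by (apply lt_0_INR, hn_pos).
replace (r m) with (2 + (r m - 2))%nat at 1 by lia. rewrite sm_add.
rewrite (sm_zero (r m - 2)).
- cbn [sm]. rewrite !W_S by lia. simpl.
  rewrite INR_nS. rewrite !plus_INR, !mult_INR. simpl.
  replace ((INR i * INR (r m) + 0) / (INR (r m) * INR (n m))) with (INR i / INR (n m)) by (field; lra).
  replace ((INR i * INR (r m) + 1) / (INR (r m) * INR (n m))) with (INR i / INR (n m) + 1 / (INR (r m) * INR (n m))) by (field; lra).
  ring.
- intros j Hj. rewrite W_S by lia. simpl. ring.
Qed.

Lemma Sl_Phi k d : Sl (k + d) (Phi k) <= 2 * om k * (a k / 64) * (2 / INR (n k) - 2 / INR (n (k + d))).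
Proof.
induction d.
- rewrite Nat.add_0_r. unfold Sl. rewrite sm_zero.
  + lra.
  + intros i _. rewrite Phi_grid. ring.
- rewrite <- plus_n_Sm. rewrite Sl_S.
  set (m := (k + d)%nat) in *.
  pose proof (p_ge0 (S m)). pose proof (p_le_half (S m)). pose proof (p_le_a (S m)).
  pose proof (a_mono k (S m) ltac:(unfold m; lia)). pose proof (om_ge0 k).
  assert (Hn : 0 < INR (n m)) by (apply lt_0_INR, hn_pos).
  assert (Hn' : 0 < INR (n (S m))) by (apply lt_0_INR, hn_pos).
  assert (H2n : 2 * INR (n m) <= INR (n (S m))).
  { replace 2 with (INR 2) by reflexivity. rewrite <- mult_INR. apply le_INR, n_double. }
  set (del := 1 / INR (n (S m))).
  assert (Hdel : 0 <= del) by (unfold del, Rdiv; rewrite Rmult_1_l; apply Rlt_le, Rinv_0_lt_compat; lra).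
  apply Rle_trans with (Sl m (Phi k) + p (S m) * (2 * om k * del)).
  + replace (Sl m (Phi k) + p (S m) * (2 * om k * del)) with
      (sm (n m) (fun i => Phi k (INR i / INR (n m)) * W m i + (p (S m) * (2 * om k * del)) * W m i)).
    2:{ rewrite sm_plus, sm_scal, W_total. unfold Sl. ring. }
    apply sm_le. intros i _.
    pose proof (Phi_lip k (INR i / INR (n m)) del Hdel). pose proof (W_ge0 m i).
    pose proof (Phi_ge0 k (INR i / INR (n m))).
    assert ((1 - p (S m)) * Phi k (INR i / INR (n m)) + p (S m) * Phi k (INR i / INR (n m) + del)
      <= Phi k (INR i / INR (n m)) + p (S m) * (2 * om k * del)) by nra.
    nra.
  + assert (Hp : p (S m) <= a k / 64) by lra.
    assert (Hd : del <= 2 / INR (n m) - 2 / INR (n (S m))).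
    { unfold del. apply (Rmult_le_reg_r (INR (n m) * INR (n (S m)))); [nra|].
      replace (1 / INR (n (S m)) * (INR (n m) * INR (n (S m)))) with (INR (n m)) by (field; lra).
      replace ((2 / INR (n m) - 2 / INR (n (S m))) * (INR (n m) * INR (n (S m)))) with
        (2 * INR (n (S m)) - 2 * INR (n m)) by (field; lra). lra. }
    assert (p (S m) * (2 * om k * del) <= 2 * om k * (a k / 64) * (2 / INR (n m) - 2 / INR (n (S m)))).
    { apply Rle_trans with ((a k / 64) * (2 * om k * del)).
      - apply Rmult_le_compat_r; [nra| exact Hp].
      - pose proof (ha_pos k).
        replace (a k / 64 * (2 * om k * del)) with ((2 * om k * (a k / 64)) * del) by ring.
        apply Rmult_le_compat_l; [|exact Hd]. unfold Rdiv. nra. }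
    lra.
Qed.

Lemma F01 : F 1 - F 0 = 1.
Proof. rewrite F_one, F_zero by lra. ring. Qed.

Lemma RSF_Sl f m : RSF F f (n m) = Sl m f.
Proof.
unfold RSF, Sl, dF, xg. apply sm_ext. intros i _.
rewrite !F_grid, G_succ. ring.
Qed.

Lemma main_bound k : exists re im,
  Un_cv (RSF F (fun t => cos (om k * t))) re /\
  Un_cv (RSF F (fun t => sin (om k * t))) im /\
  sqrt ((re - 1) ^ 2 + im ^ 2) <= a k.
Proof.
pose proof (om_ge0 k) as Hom.
destruct (RSF_limit F F_mono F01 (fun t => cos (om k * t)) (om k) Hom) as [re [Hre Bre]].
{ intros x y. replace (om k * Rabs (x - y)) with (Rabs (om k * x - om k * y)).
  - apply cos_lip.
  - rewrite <- Rmult_minus_distr_l, Rabs_mult, Rabs_right by lra. reflexivity. }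
destruct (RSF_limit F F_mono F01 (fun t => sin (om k * t)) (om k) Hom) as [im [Him Bim]].
{ intros x y. replace (om k * Rabs (x - y)) with (Rabs (om k * x - om k * y)).
  - apply sin_lip.
  - rewrite <- Rmult_minus_distr_l, Rabs_mult, Rabs_right by lra. reflexivity. }
exists re, im. split; [exact Hre| split; [exact Him|]].
pose proof (ha_pos k) as Hak.
assert (Hnk : 0 < INR (n k)) by (apply lt_0_INR, hn_pos).
destruct (nat_large (32 * INR (n k) / a k)) as [N0 HN0].
set (m := (k + N0)%nat).
assert (Hnm : 32 * INR (n k) / a k < INR (n m)).
{ eapply Rlt_le_trans; [exact HN0|]. apply le_INR. pose proof (n_ge m). unfold m in *. lia. }
assert (Hnm0 : 0 < INR (n m)) by (apply lt_0_INR, hn_pos).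
specialize (Bre (n m) (hn_pos m)). specialize (Bim (n m) (hn_pos m)).
rewrite RSF_Sl in Bre, Bim.
pose proof (Sl_Phi k N0) as HPhi. fold m in HPhi.
assert (Hdec : Sl m (Phi k) = 1 - Sl m (fun t => cos (om k * t)) + Sl m (fun t => Rabs (sin (om k * t)))).
{ rewrite <- (W_total m) at 1. unfold Sl. rewrite sm_minus, <- sm_plus. apply sm_ext. intros i _.
  unfold Phi. ring. }
assert (Hc1 : Sl m (fun t => cos (om k * t)) <= 1).
{ rewrite <- (W_total m). unfold Sl. apply sm_le. intros i _.
  pose proof (COS_bound (om k * (INR i / INR (n m)))). pose proof (W_ge0 m i). nra. }
assert (Hs1 : Rabs (Sl m (fun t => sin (om k * t))) <= Sl m (fun t => Rabs (sin (om k * t)))).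
{ unfold Sl. eapply Rle_trans; [apply sm_abs|]. apply sm_le. intros i _.
  rewrite Rabs_mult, (Rabs_right (W m i)) by (apply Rle_ge, W_ge0). lra. }
assert (Hre1 : Rabs (re - 1) <= om k / INR (n m) + (1 - Sl m (fun t => cos (om k * t)))).
{ replace (re - 1) with ((re - Sl m (fun t => cos (om k * t))) - (1 - Sl m (fun t => cos (om k * t)))) by ring.
  eapply Rle_trans; [apply Rabs_triang|]. rewrite Rabs_Ropp, (Rabs_right (1 - _)) by lra. lra. }
assert (Him1 : Rabs im <= om k / INR (n m) + Sl m (fun t => Rabs (sin (om k * t)))).
{ replace im with ((im - Sl m (fun t => sin (om k * t))) + Sl m (fun t => sin (om k * t))) by ring.
  eapply Rle_trans; [apply Rabs_triang|]. lra. }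
assert (HB : 2 * om k * (a k / 64) * (2 / INR (n k) - 2 / INR (n m)) <= PI * a k / 8).
{ assert (0 <= 2 / INR (n m)) by (unfold Rdiv; apply Rmult_le_pos; [lra| apply Rlt_le, Rinv_0_lt_compat; lra]).
  replace (2 * om k * (a k / 64) * (2 / INR (n k) - 2 / INR (n m)))
    with (PI * a k / 8 - (2 * om k * (a k / 64)) * (2 / INR (n m))) by (unfold om; field; lra).
  assert (0 <= 2 * om k * (a k / 64)) by (apply Rmult_le_pos; lra).
  assert (0 <= 2 * om k * (a k / 64) * (2 / INR (n m))) by (apply Rmult_le_pos; lra). lra. }
assert (Hom2 : 2 * (om k / INR (n m)) <= PI * a k / 8).
{ unfold om. pose proof PI_RGT_0.
  assert (32 * INR (n k) <= a k * INR (n m)).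
  { apply (Rmult_lt_compat_l (a k)) in Hnm; [|lra].
    replace (a k * (32 * INR (n k) / a k)) with (32 * INR (n k)) in Hnm by (field; lra). lra. }
  apply (Rmult_le_reg_r (INR (n m))); [lra|].
  replace (2 * (2 * PI * INR (n k) / INR (n m)) * INR (n m)) with (4 * PI * INR (n k)) by (field; lra).
  nra. }
pose proof PI_4.
assert (Hsum : Rabs (re - 1) + Rabs im <= a k) by nra.
apply Rle_trans with (sqrt ((Rabs (re - 1) + Rabs im) ^ 2)).
- apply sqrt_le_1_alt. rewrite <- (pow2_abs (re - 1)), <- (pow2_abs im).
  pose proof (Rabs_pos (re - 1)). pose proof (Rabs_pos im). nra.
- rewrite sqrt_pow2 by (pose proof (Rabs_pos (re - 1)); pose proof (Rabs_pos im); lra). exact Hsum.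
Qed.

Lemma RS_eq (mu : (R -> Prop) -> R)
  (Hico : forall x y, x <= y -> mu (fun t => x <= t < y) = F y - F x) f N :
  RSF F f N = RS_sum mu f N.
Proof.
destruct N as [|N]; [reflexivity|].
unfold RS_sum. rewrite sum_f_R0_sm. unfold RSF. apply sm_ext. intros j _.
assert (HN : 0 < INR (S N)) by (apply lt_0_INR; lia).
rewrite Hico.
- unfold dF, xg. rewrite (S_INR j). reflexivity.
- unfold Rdiv. apply Rmult_le_compat_r; [apply Rlt_le, Rinv_0_lt_compat; exact HN| lra].
Qed.

Lemma final_stdlib : exists Fc : R -> R,
  (forall x y, x <= y -> Fc x <= Fc y) /\ continuity Fc /\
  (forall x, x <= R0 -> Fc x = R0) /\ (forall x, R1 <= x -> Fc x = R1) /\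
  forall mu : (R -> Prop) -> R,
  (forall x y, x <= y -> mu (fun t => x <= t < y) = Fc y - Fc x) ->
  forall k, exists re im, fourier_coeff mu (n k) re im /\ cmod_minus1 re im <= a k.
Proof.
exists F. split; [exact F_mono| split; [exact F_cont| split; [exact F_zero| split; [exact F_one|]]]].
intros mu Hico k.
destruct (main_bound k) as [re [im [H1 [H2 H3]]]].
exists re, im. split; [split|].
- apply (Un_cv_ext (RSF F (fun t => cos (om k * t)))); [|exact H1].
  intros N. apply RS_eq. exact Hico.
- apply (Un_cv_ext (RSF F (fun t => sin (om k * t)))); [|exact H2].
  intros N. apply RS_eq. exact Hico.
- exact H3.
Qed.

End Cells.

Module MC.
From HB Require Import structures.
From mathcomp Require Import all_boot all_order all_algebra.
From mathcomp Require Import all_classical all_reals all_analysis.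
From mathcomp Require Import Rstruct Rstruct_topology.
Import Order.TTheory GRing.Theory Num.Theory.
HB.instance Definition _ := Order_isNbhs.Build _ R (@real_order_nbhsE R).
Set Implicit Arguments. Unset Strict Implicit. Unset Printing Implicit Defensive.
Section LS.
Local Open Scope ring_scope.
Local Open Scope classical_set_scope.
Variable F : R -> R.
Hypothesis Fnd : forall x y, Rle x y -> Rle (F x) (F y).
Hypothesis Fc : continuity F.
Hypothesis F0 : forall x, Rle x R0 -> F x = R0.
Hypothesis F1 : forall x, Rle R1 x -> F x = R1.

Definition FF := F.
Let nd : {homo FF : x y / x <= y}.
Proof. by move=> x y /RleP h; apply/RleP; apply: Fnd. Qed.
Let rc : right_continuous FF.
Proof. move=> x; apply: cvg_within_filter; apply/continuity_pt_cvg; exact: Fc. Qed.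
HB.instance Definition _ := isCumulative.Build R _ R FF nd rc.
Let FNy : FF @ -oo --> (0:R).
Proof.
apply: cvg_near_cst; exists 0%R; split => // x /ltW /RleP h.
exact: F0.
Qed.
Let Fy : FF @ +oo --> (1:R).
Proof.
apply: cvg_near_cst; exists 1%R; split => // x /ltW /RleP h.
exact: F1.
Qed.
HB.instance Definition _ := isCumulativeBounded.Build R 0 1 FF FNy Fy.

Definition P := lebesgue_stieltjes_measure FF.

Definition mT := g_sigma_algebraType R.-ocitv.-measurable.

Let fin (A : set mT) : measurable A -> P A \is a fin_num.
Proof.
move=> mA; rewrite ge0_fin_numE ?measure_ge0 //.
exact: (le_lt_trans (probability_le1 P mA) (ltry _)).
Qed.

Let Poc (a b : R) : a <= b -> P `]a, b] = (F b - F a)%:E.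
Proof.
move=> ab; rewrite /P /lebesgue_stieltjes_measure /measure_extension measurable_mu_extE/=; last exact: is_ocitv.
by rewrite wlength_itv_bnd.
Qed.

Lemma borel_meas A : borel A -> measurable (A : set mT).
Proof.
elim => {A}.
- move=> a b.
  have -> : (fun x => Rle a x /\ Rlt x b) = `[a, b[%classic.
    apply/funext => x; rewrite /= in_itv /=; apply/propext; split.
      by move=> [/RleP h1 /RltP h2]; rewrite h1 h2.
    by move=> /andP [/RleP h1 /RltP h2].
  exact: measurable_itv.
- by move=> A _ mA; exact: measurableC.
- move=> A _ mA.
  have -> : (fun x => exists n, A n x) = \bigcup_n A n.
    apply/funext => x; apply/propext; split.
      by move=> [n h]; exists n.
    by move=> [n _ h]; exists n.
  exact: bigcup_measurable.
- move=> A B AB _ mA.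
  have <- : A = B by apply/funext => x; apply/propext; exact: AB.
  exact: mA.
Qed.


Lemma sumf_big (s : nat -> R) n : sum_f_R0 s n = \sum_(0 <= i < n.+1) s i.
Proof.
elim: n => [|n IH]; first by rewrite big_nat1.
by rewrite big_nat_recr //= -IH.
Qed.

Lemma cvg_Un_cv (u : nat -> R) l : u @ \oo --> l -> Un_cv (fun n => u n.+1) l.
Proof.
move=> h0 e e0; have h := (@cvgrPdist_lt _ R^o _ _ _ u l).1 h0 e (introT RltP e0).
have [N _ HN] := h.
exists N => n /ssrnat.leP nN; rewrite /R_dist; apply/RltP.
have := HN n.+1 (leqW nN); rewrite distrC; exact.
Qed.

Let mu (A : set R) := fine (P A).

Lemma mu_additive (A : nat -> R -> Prop) :
  (forall n, borel (A n)) ->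
  (forall m n x, m <> n -> A m x -> A n x -> False) ->
  infinite_sum (fun n => mu (A n)) (mu (fun x => exists n, A n x)).
Proof.
move=> bA dA.
have mA : forall n, measurable (A n : set mT) by move=> n; exact: borel_meas.
have tA : trivIset setT A.
  move=> m n _ _ [x [h1 h2]]; apply/eqP/negPn/negP => /eqP mn.
  exact: (dA m n x mn h1 h2).
have h := @measure_sigma_additive _ _ _ P _ mA tA.
have -> : (fun x => exists n, A n x) = \bigcup_n A n.
  apply/funext => x; apply/propext; split.
    by move=> [n hh]; exists n.
  by move=> [n _ hh]; exists n.
have mU : measurable (\bigcup_n A n : set mT) by exact: bigcup_measurable.
have h2 : (fun n => fine (\sum_(0 <= i < n) P (A i))) @ \oo --> fine (P (\bigcup_n A n)).
  by apply: fine_cvg; rewrite fineK; [exact: h | exact: fin mU].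
move=> e e0.
have := cvg_Un_cv h2 e0 => -[N HN]; exists N => n nN.
have -> : sum_f_R0 (fun n0 : nat => mu (A n0)) n = fine (\sum_(0 <= i < n.+1) P (A i)).
  by rewrite sumf_big /mu sum_fine // => i _; apply: fin.
exact: HN.
Qed.


Let Pset1_le (t e : R) : 0 < e -> (P [set t] <= (F t - F (t - e))%:E)%E.
Proof.
move=> e0; rewrite -Poc; last by rewrite lerBlDr lerDl ltW.
apply: le_measure; rewrite ?inE; [exact: measurable_set1 | exact: measurable_itv | ].
by move=> x /= ->; rewrite in_itv /= lexx andbT ltrBlDr ltrDl.
Qed.

Let mu_set1_le (t e : R) : (0 < e)%coqR -> (mu [set t] <= F t - F (t - e))%coqR.
Proof.
move=> /RltP e0; apply/RleP; rewrite /mu.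
have := Pset1_le t e0; rewrite -(fineK (fin (measurable_set1 t))) lee_fin; exact.
Qed.

Let mu_ge0 A : (0 <= mu A)%coqR.
Proof. apply/RleP; exact: fine_ge0 (measure_ge0 _ _). Qed.

Lemma mu_set1 (t : R) : mu [set t] = 0.
Proof.
apply: Rle_antisym; last exact: mu_ge0.
apply: Rnot_lt_le => h.
have [d [d0 hd]] := Fc t h.
have e0 : (0 < d / 2)%coqR by lra.
have := mu_set1_le t e0.
have hne : (t - d / 2 <> t)%coqR by lra.
have hlt : (dist R_met (t - d / 2) t < d)%coqR.
  by simpl; unfold R_dist; rewrite Rabs_left1; lra.
have h1 := hd _ (conj (conj I (nesym hne)) hlt).
simpl in h1; unfold R_dist in h1.
move=> h2.
have := Rle_abs (F (t - d / 2) - F t)%coqR.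
have := Rabs_minus_sym (F (t - d / 2)) (F t).
have := Rle_abs (F t - F (t - d / 2))%coqR.
lra.
Qed.


Let P_set1 (t : R) : P [set t] = 0%E.
Proof.
have := mu_set1 t; rewrite /mu => h.
by rewrite -(fineK (fin (measurable_set1 t))) h.
Qed.

Lemma mu_Ico (a b : R) : (a <= b)%coqR ->
  mu (fun x => (a <= x)%coqR /\ (x < b)%coqR) = (F b - F a)%coqR.
Proof.
move=> ab.
have -> : (fun x => (a <= x)%coqR /\ (x < b)%coqR) = `[a, b[%classic.
  apply/funext => x; rewrite /= in_itv /=; apply/propext; split.
    by move=> [/RleP h1 /RltP h2]; rewrite h1 h2.
  by move=> /andP [/RleP h1 /RltP h2].
case: (Req_dec a b) => [<-|anb].
  rewrite set_itv_ge ?bnd_simp ?lexx // /mu; have -> : P set0 = 0%E by exact: measure0.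
  rewrite /=; apply: esym; exact: Rminus_diag_eq.
have lab : a < b by apply/RltP; lra.
have e1 : P `[a, b] = P `]a, b].
  rewrite -(setU1itv false) ?bnd_simp ?ltW //.
  apply: (etrans (@measureU _ _ _ P [set a] `]a, b] _ _ _)).
  - exact: measurable_set1.
  - exact: measurable_itv.
  - by apply/seteqP; split => x //= [-> ]; rewrite in_itv /= ltxx.
    have aux : forall (x y : \bar R), x = 0%E -> (x + y)%E = y by move=> x y ->; rewrite add0e.
    by apply: aux; exact: P_set1.
have e2 : P `[a, b] = P `[a, b[.
  rewrite -(@setUitv1 _ _ _ _ true) ?bnd_simp ?ltW //.
  apply: (etrans (@measureU _ _ _ P `[a, b[ [set b] _ _ _)).
  - exact: measurable_itv.
  - exact: measurable_set1.
  - by apply/seteqP; split => x //= [h1 h2]; move: h1; rewrite h2 /= in_itv /= ltxx andbF.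
  - have aux : forall (x y : \bar R), y = 0%E -> (x + y)%E = x by move=> x y ->; rewrite adde0.
    by apply: aux; exact: P_set1.
by rewrite /mu -e2 e1 Poc ?ltW.
Qed.


Lemma stieltjes_measure_exists : exists mu0 : (R -> Prop) -> R,
  borel_prob_measure_T mu0 /\ atomless mu0 /\
  (forall a b, (a <= b)%coqR -> mu0 (fun x => (a <= x)%coqR /\ (x < b)%coqR) = (F b - F a)%coqR).
Proof.
exists mu; split; [split; [|split; [|split]] | split].
- move=> A _; exact: mu_ge0.
- exact: mu_additive.
- rewrite /mu; have -> : P (fun _ : R => True) = 1%E by exact: probability_setT.
  done.
- rewrite mu_Ico; last exact: Rle_0_1.
  rewrite F1; last exact: Rle_refl.
  rewrite F0; last exact: Rle_refl.
  simpl; lra.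
- move=> t; exact: mu_set1.
- exact: mu_Ico.
Qed.

End LS.
End MC.

Theorem mainTheorem11 (n : nat -> nat) (a : nat -> R)
  (hn_pos : forall k, (0 < n k)%nat)
  (hn_inc : forall k, (n k < n (S k))%nat)
  (hn_div : forall k, Nat.divide (n k) (n (S k)))
  (ha_pos : forall k, 0 < a k)
  (ha_dec : Un_decreasing a)
  (ha_lim : Un_cv a 0)
  (ha_div : cv_infty (fun N => sum_f_R0 a N)) :
  exists mu : (R -> Prop) -> R,
    borel_prob_measure_T mu /\ atomless mu /\
    forall k, exists re im,
      fourier_coeff mu (n k) re im /\ cmod_minus1 re im <= a k.
Proof.
  destruct (final_stdlib n a hn_pos hn_inc hn_div ha_pos ha_dec ha_div)
    as [Fc [Hm [Hc [H0 [H1 Hfour]]]]].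
  destruct (@MC.stieltjes_measure_exists Fc Hm Hc H0 H1) as [mu [Hmu [Hat Hico]]].
  exists mu. split; [exact Hmu|]. split; [exact Hat|].
  apply Hfour. exact Hico.
Qed.
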